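(* If $H$ and $G$ are graphs and $H$ is an immersion of $G$, then $\delta^{\infty}_{\rm e}(H)\leq\delta^{\infty}_{\rm e}(G)$.
   Context: All graphs are finite, undirected, loopless, may have parallel edges. Lifting two edges $ux$ and $xw$ means deleting them and adding an edge $uw$ (nothing added if $u=w$); $H$ is an immersion of $G$ if a graph isomorphic to $H$ can be obtained from a subgraph of $G$ by a sequence of liftings. $\delta^{\infty}_{\rm e}(G)$ (edge-admissibility) is the minimum, over all linear orderings $\langle v_1,\dots,v_n\rangle$ of $V(G)$, of $\max_i\lambda_i$, where $\lambda_i$ is the minimum number of edges of $G$ whose removal destroys every path from $v_i$ to $\{v_1,\dots,v_{i-1}\}$ ($\lambda_1=0$). *)

(* Defs.v *)
From Stdlib Require Import Relation_Operators.
From mathcomp Require Import all_boot.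
Set Implicit Arguments. Unset Strict Implicit. Unset Printing Implicit Defensive.

(* A finite loopless multigraph on vertex type V: the multiplicity of each
   unordered pair {x,y} (a 2-element set); non-2-element sets carry no edge. *)
Record mgraph (V : finType) := MGraph {
  mult : {set V} -> nat ;
  mult_wf : forall e : {set V}, #|e| != 2 -> mult e = 0 }.

(* one lifting: remove an edge ux and a distinct edge xw, add uw (if u != w) *)
Definition lift1 (V : finType) (m m' : {set V} -> nat) : Prop :=
  exists u x w : V, [/\ u != x, x != w,
    (forall e, ((e == [set u; x]) + (e == [set x; w]) <= m e)%N) &
    (forall e, m' e = m e - ((e == [set u; x]) + (e == [set x; w]))
                      + ((u != w) && (e == [set u; w])))%N].

(* H is an immersion of G: a subgraph of G (vertex set = image of f,
   edge multiplicities m0 <= those of G, all m0-edges inside the image)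
   is turned by a sequence of liftings into m1, and f is an isomorphism
   from H onto (image f, m1). *)
Definition immersion (VH VG : finType) (H : mgraph VH) (G : mgraph VG) : Prop :=
  exists f : VH -> VG, injective f /\
  exists m0 m1 : {set VG} -> nat,
    [/\ (forall e, m0 e <= mult G e)%N,
        (forall e, 0 < m0 e -> e \subset f @: [set: VH])%N,
        clos_refl_trans _ (@lift1 VG) m0 m1 &
        (forall a b : VH, a != b -> mult H [set a; b] = m1 [set f a; f b])].

Definition adj (V : finType) (m : {set V} -> nat) : rel V :=
  fun x y => (x != y) && (0 < m [set x; y])%N.

Definition mbound (V : finType) (G : mgraph V) : nat := (\sum_(e : {set V}) mult G e)%N.

(* c is a set of edges (with multiplicities, c <= mult G) whose removal
   destroys every path from v to S (paths from v to v itself are ignored;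
   in all uses v \notin S). *)
Definition cut_of (V : finType) (G : mgraph V) (v : V) (S : {set V}) (k : nat) : bool :=
  [exists c : {ffun {set V} -> 'I_(mbound G).+1},
    [&& [forall e, (c e <= mult G e)%N],
        (\sum_(e : {set V} | #|e| == 2) (c e : nat) == k)%N &
        [forall s in S, (s != v) ==> ~~ connect (adj (fun e => mult G e - c e)%N) v s]]].

Lemma connect_noedge (V : finType) (r : rel V) x y :
  (forall a b, ~~ r a b) -> connect r x y -> x = y.
Proof.
move=> Hr /connectP [[|z p]] /= ; first by move=> _ ->.
by case/andP => rxz; rewrite (negbTE (Hr _ _)) in rxz.
Qed.

Lemma cut_of_ex (V : finType) (G : mgraph V) v S : exists k, cut_of G v S k.
Proof.
have Hb : forall e, (mult G e < (mbound G).+1)%N.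
  move=> e; rewrite ltnS /mbound (bigD1 e) //=; exact: leq_addr.
exists (\sum_(e : {set V} | #|e| == 2) mult G e)%N.
apply/existsP; exists [ffun e => Ordinal (Hb e)].
apply/and3P; split.
- by apply/forallP => e; rewrite ffunE.
- by apply/eqP; apply: eq_bigr => e _; rewrite ffunE.
- apply/forallP => s; apply/implyP => _; apply/implyP => hsv; apply/negP => hc.
  have := connect_noedge _ hc; rewrite /= => Heq.
  suff: v = s by move=> E; rewrite E eqxx in hsv.
  apply: Heq => a b; rewrite /adj ffunE /= subnn ltnn andbF //.
Qed.

Definition lambda (V : finType) (G : mgraph V) (v : V) (S : {set V}) : nat :=
  ex_minn (cut_of_ex G v S).

(* a linear ordering <v_1,...,v_n> is given by an injective rank function
   r : V -> 'I_#|V| (v_i is the vertex of rank i-1); the predecessors of v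
   are the u with r u < r v. *)
Definition order_value (V : finType) (G : mgraph V) (r : {ffun V -> 'I_#|V|}) : nat :=
  (\max_(v : V) lambda G v [set u | (r u < r v)%N])%N.

Definition adm_of (V : finType) (G : mgraph V) (k : nat) : bool :=
  [exists r : {ffun V -> 'I_#|V|}, injectiveb r && (order_value G r == k)].

Lemma adm_of_ex (V : finType) (G : mgraph V) : exists k, adm_of G k.
Proof.
exists (order_value G [ffun v => enum_rank v]).
apply/existsP; exists [ffun v => enum_rank v]; rewrite eqxx andbT.
by apply/injectiveP => x y; rewrite !ffunE; apply: enum_rank_inj.
Qed.

Definition edge_adm (V : finType) (G : mgraph V) : nat := ex_minn (adm_of_ex G).

(* Main.v *)
Require Import Defs.
From mathcomp Require Import all_boot.
From Stdlib Require Import Relation_Operators.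
Set Implicit Arguments. Unset Strict Implicit.

Section Aux.
Variable V : finType.

Definition cr (X : {set V}) (e : {set V}) : bool := (#|e| == 2) && (#|e :&: X| == 1).

Definition bd (m : {set V} -> nat) (X : {set V}) : nat := \sum_(e : {set V}) cr X e * m e.

Lemma cr_pair X a b : a != b -> cr X [set a; b] = ((a \in X) != (b \in X)).
Proof.
move=> ab; rewrite /cr cards2 ab /=.
case aX: (a \in X); case bX: (b \in X) => /=.
- suff ->: [set a; b] :&: X = [set a; b] by rewrite cards2 ab.
  by apply/setIidPl; rewrite subUset !sub1set aX bX.
- suff ->: [set a; b] :&: X = [set a] by rewrite cards1.
  apply/setP => y; rewrite !inE; case: (eqVneq y a) => [->|ya]; [|case: (eqVneq y b) => [->|yb]];
  by rewrite ?aX ?bX ?eqxx ?(eq_sym b a) ?(negbTE ab) ?(negbTE ya) ?(negbTE yb) ?andbF ?andbT ?orbF.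
- suff ->: [set a; b] :&: X = [set b] by rewrite cards1.
  apply/setP => y; rewrite !inE; case: (eqVneq y a) => [->|ya]; [|case: (eqVneq y b) => [->|yb]];
  by rewrite ?aX ?bX ?eqxx ?(eq_sym b a) ?(negbTE ab) ?(negbTE ya) ?(negbTE yb) ?andbF ?andbT ?orbF.
- suff ->: [set a; b] :&: X = set0 by rewrite cards0.
  apply/setP => y; rewrite !inE; case: (eqVneq y a) => [->|ya]; [|case: (eqVneq y b) => [->|yb]];
  by rewrite ?aX ?bX ?eqxx ?(eq_sym b a) ?(negbTE ab) ?(negbTE ya) ?(negbTE yb) ?andbF ?andbT ?orbF.
Qed.

Lemma sum_ind (F : {set V} -> nat) s : \sum_(e : {set V}) F e * (e == s) = F s.
Proof.
rewrite (bigD1 s) //= eqxx muln1 big1 ?addn0 // => e /negbTE ->; exact: muln0.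
Qed.

Lemma lift_bd m m' X : lift1 m m' -> bd m' X <= bd m X.
Proof.
case=> u [x] [w] [ux xw Hle Hm].
set d := fun e : {set V} => ((e == [set u; x]) + (e == [set x; w]))%N.
set ad := fun e : {set V} => nat_of_bool ((u != w) && (e == [set u; w])).
have E1 : bd m' X = (\sum_e cr X e * (m e - d e) + \sum_e cr X e * ad e)%N.
  rewrite /bd -big_split /=; apply: eq_bigr => e _; by rewrite Hm mulnDr.
have E2 : bd m X = (\sum_e cr X e * (m e - d e) + \sum_e cr X e * d e)%N.
  rewrite /bd -big_split /=; apply: eq_bigr => e _; by rewrite -mulnDr subnK //; exact: Hle.
rewrite E1 E2 leq_add2l.
have -> : (\sum_e cr X e * d e = cr X [set u; x] + cr X [set x; w])%N.
  rewrite -(sum_ind (fun e => nat_of_bool (cr X e)) [set u;x]).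
  rewrite -(sum_ind (fun e => nat_of_bool (cr X e)) [set x;w]) -big_split /=.
  by apply: eq_bigr => e _; rewrite /d mulnDr.
have -> : (\sum_e cr X e * ad e = (u != w) && cr X [set u; w])%N.
  rewrite /ad; case: (u != w) => /=; last by rewrite big1 // => e _; rewrite muln0.
  exact: sum_ind.
rewrite (@cr_pair X _ _ ux) (@cr_pair X _ _ xw).
case uw: (u != w) => //=; rewrite (@cr_pair X _ _ uw).
by case: (u \in X); case: (x \in X); case: (w \in X).
Qed.

Lemma crt_bd m0 m1 X : clos_refl_trans _ (@lift1 V) m0 m1 -> bd m1 X <= bd m0 X.
Proof.
elim=> [a b /lift_bd //| a // | a b c _ IH1 _ IH2]; exact: leq_trans IH2 IH1.
Qed.

Lemma connect_stay (r : rel V) (X : {set V}) x y :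
  (forall a b, r a b -> a \in X -> b \in X) -> connect r x y -> x \in X -> y \in X.
Proof.
move=> Hr /connectP [p]; elim: p x => [|z p IH] x /=; first by move=> _ ->.
by case/andP => rxz pz ey xX; apply: (IH z pz ey); exact: Hr rxz xX.
Qed.

End Aux.

Lemma cutA (V : finType) (G : mgraph V) v (S : {set V}) k : cut_of G v S k ->
  exists Y : {set V}, [/\ v \in Y, (forall s, s \in S -> s != v -> s \notin Y) &
                          bd (mult G) Y <= k].
Proof.
case/existsP => c /and3P [/forallP Hc /eqP Hk /forallP HS].
set r := adj (fun e => mult G e - c e).
exists [set y | connect r v y]; split.
- by rewrite inE connect0.
- move=> s sS sv; rewrite inE; move: (HS s); by rewrite sS sv.
- rewrite -Hk /bd (bigID (fun e : {set V} => #|e| == 2)) /=.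
  rewrite [X in _ + X <= _]big1 ?addn0; last first.
    by move=> e /negbTE e2; rewrite /cr e2.
  apply: leq_sum => e e2.
  case crX: (cr _ e); last by rewrite mul0n.
  rewrite mul1n; move: crX; case/cards2P: e2 => a [b [ab ->]].
  rewrite cr_pair // !inE => crX.
  rewrite leqNgt; apply/negP => lt.
  have Hab: r a b by rewrite /r /adj ab subn_gt0.
  have Hba: r b a by rewrite /r /adj eq_sym ab (setUC [set b]) subn_gt0.
  move: crX; case ca: (connect r v a); case cb: (connect r v b) => //= _.
  + by rewrite (connect_trans ca (connect1 Hab)) in cb.
  + by rewrite (connect_trans cb (connect1 Hba)) in ca.
Qed.

Lemma lamB (V : finType) (G : mgraph V) v (S : {set V}) (Y : {set V}) :
  v \in Y -> (forall s, s \in S -> s != v -> s \notin Y) ->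
  lambda G v S <= bd (mult G) Y.
Proof.
move=> vY HS.
rewrite /lambda; case: ex_minnP => k _ Hmin; apply: Hmin.
have Hb : forall e, cr Y e * mult G e < (mbound G).+1.
  move=> e; rewrite ltnS; apply: (@leq_trans (mult G e)).
    by case: (cr Y e); rewrite ?mul1n ?mul0n.
  rewrite /mbound (bigD1 e) //=; exact: leq_addr.
apply/existsP; exists [ffun e => Ordinal (Hb e)]; apply/and3P; split.
- by apply/forallP => e; rewrite ffunE /=; case: (cr Y e); rewrite ?mul1n ?mul0n.
- apply/eqP; rewrite /bd [RHS](bigID (fun e : {set V} => #|e| == 2)) /=.
  rewrite [X in _ = _ + X]big1 ?addn0; last by move=> e /negbTE e2; rewrite /cr e2.
  by apply: eq_bigr => e _; rewrite ffunE.
- apply/forallP => s; apply/implyP => sS; apply/implyP => sv; apply/negP => con.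
  have := HS s sS sv; apply/negP/negPn.
  apply: (connect_stay _ con vY) => a b.
  rewrite /adj ffunE /=; case/andP => ab pos aY; apply/negPn/negP => bY.
  have crt : cr Y [set a; b] by rewrite cr_pair // aY.
  by rewrite crt mul1n subnn in pos.
Qed.

Lemma sum_inj (I J : finType) (h : I -> J) (F : J -> nat) :
  injective h -> \sum_(i : I) F (h i) <= \sum_(j : J) F j.
Proof.
move=> hi.
have -> : \sum_(i : I) F (h i) = \sum_(j in [set h i | i in [set: I]]) F j.
  rewrite big_imset /=; last by move=> x y _ _; exact: hi.
  by apply: eq_bigl => i; rewrite inE.
rewrite [X in _ <= X](bigID (mem [set h i | i in [set: I]])) /=; exact: leq_addr.
Qed.

Lemma bdH (VH VG : finType) (H : mgraph VH) (f : VH -> VG) (m1 : {set VG} -> nat) (Y : {set VG}) :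
  injective f -> (forall a b, a != b -> mult H [set a; b] = m1 [set f a; f b]) ->
  bd (mult H) (f @^-1: Y) <= bd m1 Y.
Proof.
move=> fi Hm; rewrite /bd.
apply: (@leq_trans (\sum_(e : {set VH}) cr Y (f @: e) * m1 (f @: e))); last first.
  apply: (sum_inj (fun e' => cr Y e' * m1 e')); exact: imset_inj.
apply: leq_sum => e _.
case e2: (#|e| == 2); last by rewrite /cr e2.
case/cards2P: e2 => a [b [ab ->]].
have fab : f a != f b by rewrite inj_eq.
rewrite imsetU1 imset_set1 Hm // (cr_pair (f @^-1: Y) ab) (cr_pair Y fab) !inE; exact: leqnn.
Qed.

Theorem mainTheorem11 (VH VG : finType) (H : mgraph VH) (G : mgraph VG) :
  immersion H G -> edge_adm H <= edge_adm G.
Proof.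
move=> [f [fi [m0 [m1 [H0 _ Hcrt Hm]]]]].
rewrite /edge_adm; case: (ex_minnP (adm_of_ex G)) => kG /existsP [rG /andP [/injectiveP rGi /eqP HkG]] _.
case: ex_minnP => kH _ HminH.
pose rk v := #|[set u | rG (f u) < rG (f v)]|.
have rk_lt : forall v, rk v < #|VH|.
  move=> v; rewrite -cardsT; apply: proper_card; rewrite properEneq subsetT andbT.
  apply/eqP => E; have: v \in [set u | rG (f u) < rG (f v)] by rewrite E inE.
  by rewrite inE ltnn.
pose rH := [ffun v => Ordinal (rk_lt v)].
have key : forall a b, (rk a < rk b) = (rG (f a) < rG (f b)).
  move=> a b; case: (ltnP (rG (f a)) (rG (f b))) => h.
  - apply: proper_card; apply/properP; split.
      by apply/subsetP => u; rewrite !inE => h'; exact: ltn_trans h' h.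
    by exists a; rewrite !inE ?ltnn.
  - rewrite ltnNge; apply/negbF; apply: subset_leq_card; apply/subsetP => u.
    by rewrite !inE => h'; exact: leq_trans h' h.
have rHi : injective rH.
  move=> a b /(congr1 val); rewrite !ffunE /= => E.
  have h1 := key a b; have h2 := key b a; rewrite E ltnn in h1 h2.
  apply: fi; apply: rGi.
  case: (ltngtP (rG (f a)) (rG (f b))) => [lt|lt|eq].
  - by rewrite lt in h1.
  - by rewrite lt in h2.
  - exact: val_inj.
have adm : adm_of H (order_value H rH).
  apply/existsP; exists rH; apply/andP; split; last exact: eqxx.
  by apply/injectiveP.
apply: leq_trans (HminH _ adm) _.
rewrite -HkG /order_value; apply/bigmax_leqP => v _.
apply: (leq_trans _ (@leq_bigmax _ (fun w => lambda G w [set u | rG u < rG w]) (f v))).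
rewrite {2}/lambda; case: ex_minnP => k Hcut _.
have [Y [vY HS bdY]] := cutA Hcut.
apply: leq_trans (@lamB _ H v _ (f @^-1: Y) _ _) _.
- by rewrite inE.
- move=> s; rewrite inE !ffunE /= key => sS sv; rewrite inE.
  by apply: HS; [rewrite inE | rewrite inj_eq].
- apply: leq_trans (bdH _ fi Hm) _.
  apply: leq_trans (crt_bd _ Hcrt) _.
  apply: leq_trans _ bdY.
  by apply: leq_sum => e _; rewrite leq_mul2l H0 orbT.
Qed.
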